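(* Let $G$ be a group with a regular gliding system such that $\dim X_G<\infty$. Then for every set $\mathcal{D}\subset G$ satisfying the square condition and every $A\in\mathcal{D}$, the inclusion-induced homomorphism $\pi_1(X_{\mathcal{D}},A)\to\pi_1(X_G,A)$ is injective.
   Context: Gliding system $(\mathcal{G},\mathcal{I})$ in $G$: $\mathcal{G}\subset G\setminus\{1\}$ closed under inversion (glides), $\mathcal{I}\subset\mathcal{G}\times\mathcal{G}$ (independence) with $(s^{-1},t),(t,s)\in\mathcal{I}$ and $st=ts\ne1$ whenever $(s,t)\in\mathcal{I}$. Pre-cubic set: finite set $S$ of pairwise independent glides, $[S]=\prod_{s\in S}s$; cubic: pre-cubic with $[T_1]\ne[T_2]$ for distinct $T_1,T_2\subset S$; the system is regular if all pre-cubic sets are cubic. Glide complex $X_G$: cubed complex with one $k$-cube for each equivalence class of based cubes $(A,S)$ ($A\in G$, $S$ cubic of size $k$) under $(A,S)\sim([T]A,(S\setminus T)\cup\{t^{-1}:t\in T\})$; vertices $[T]A$ ($T\subset S$), faces the cubes of $(A,S')$, $S'\subset S$. $X_{\mathcal{D}}$: subcomplex of cubes all of whose vertices lie in $\mathcal{D}$. $\mathcal{D}$ satisfies the square condition if for any $A\in\mathcal{D}$ and independent glides $s,t$ with $sA,tA\in\mathcal{D}$ one has $stA\in\mathcal{D}$. *)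

(* Defs.v *)
From Stdlib Require Import List Relations.
Import ListNotations.
Set Implicit Arguments.

Record group := Group {
  carrier :> Type;
  mul : carrier -> carrier -> carrier;
  one : carrier;
  inv : carrier -> carrier;
  mulA : forall x y z, mul x (mul y z) = mul (mul x y) z;
  mul1g : forall x, mul one x = x;
  mulg1 : forall x, mul x one = x;
  mulVg : forall x, mul (inv x) x = one;
  mulgV : forall x, mul x (inv x) = one
}.
Arguments mul {g} _ _.
Arguments inv {g} _.
Arguments one g : assert.

Record gliding_system (G : group) := GlidingSystem {
  glide : G -> Prop;
  indep : G -> G -> Prop;
  glide_ne1 : ~ glide (one G);
  glide_inv : forall s, glide s -> glide (inv s);
  indep_glide : forall s t, indep s t -> glide s /\ glide t;
  indep_inv : forall s t, indep s t -> indep (inv s) t;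
  indep_sym : forall s t, indep s t -> indep t s;
  indep_comm : forall s t, indep s t -> mul s t = mul t s;
  indep_ne1 : forall s t, indep s t -> mul s t <> one G
}.

Section Glide.
Variable G : group.
Variable gs : gliding_system G.

Definition gprod (l : list G) : G := fold_right (@mul G) (one G) l.

(* finite sets of glides are represented by duplicate-free lists *)
Definition pre_cubic (S : list G) : Prop :=
  NoDup S /\ (forall s, In s S -> glide gs s) /\
  (forall s t, In s S -> In t S -> s <> t -> indep gs s t).

Definition subset_of (T S : list G) : Prop := NoDup T /\ incl T S.

Definition cubic (S : list G) : Prop :=
  pre_cubic S /\
  forall T1 T2, subset_of T1 S -> subset_of T2 S ->
    gprod T1 = gprod T2 -> forall x, In x T1 <-> In x T2.

Definition regular : Prop := forall S, pre_cubic S -> cubic S.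

(* dim X_G < infinity: sizes of cubic sets (= dimensions of cubes) bounded *)
Definition finite_dim : Prop :=
  exists N : nat, forall S, cubic S -> length S <= N.

Definition square_condition (D : G -> Prop) : Prop :=
  forall A s t, D A -> indep gs s t -> D (mul s A) -> D (mul t A) ->
    D (mul (mul s t) A).

(* 2-skeleton of the subcomplex X_P of X_G spanned by the vertex set P
   (P = everything gives X_G itself). *)

(* B and A span an edge (1-cube (A,{s})) of X_P *)
Definition adj (P : G -> Prop) (A B : G) : Prop :=
  P A /\ P B /\ exists s, cubic [s] /\ B = mul s A.

Fixpoint edge_path (P : G -> Prop) (l : list G) : Prop :=
  match l with
  | [] => False
  | [x] => P x
  | x :: ((y :: _) as r) => adj P x y /\ edge_path P r
  end.

Definition eloop (P : G -> Prop) (A : G) (l : list G) : Prop :=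
  edge_path P l /\ hd_error l = Some A /\ last l A = A.

(* elementary homotopies of edge paths in X_P: backtracking and pushing
   across a square (2-cube (A,{s,t})) of X_P *)
Inductive hstep (P : G -> Prop) : list G -> list G -> Prop :=
| hs_back : forall l1 l2 x y, adj P x y ->
    hstep P (l1 ++ x :: y :: x :: l2) (l1 ++ x :: l2)
| hs_square : forall l1 l2 A s t, cubic [s; t] ->
    P A -> P (mul s A) -> P (mul t A) -> P (mul (mul s t) A) ->
    hstep P (l1 ++ A :: mul s A :: mul (mul s t) A :: l2)
            (l1 ++ A :: mul t A :: mul (mul s t) A :: l2).

Definition htpy (P : G -> Prop) : relation (list G) :=
  clos_refl_sym_trans (list G) (hstep P).

End Glide.

(* Main.v *)
Require Import Defs.
From Stdlib Require Import List Relations Lia Classical.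
Import ListNotations.

Section W.
Variable G : group.
Variable gs : gliding_system G.
Local Notation ind := (indep gs).
Arguments mulA {g} x y z. Arguments mul1g {g} x. Arguments mulg1 {g} x. Arguments mulVg {g} x. Arguments mulgV {g} x.

Lemma inv_unique (a b : G) : mul a b = one G -> b = inv a.
Proof. intro H. rewrite <- (mul1g b), <- (mulVg a), <- mulA, H, mulg1. reflexivity. Qed.

Lemma inv_inv (x : G) : inv (inv x) = x.
Proof. symmetry. apply inv_unique. apply mulVg. Qed.

Lemma inv_mul (a b : G) : inv (mul a b) = mul (inv b) (inv a).
Proof. symmetry. apply inv_unique.
  rewrite mulA, <- (mulA a b), mulgV, mulg1, mulgV. reflexivity. Qed.

Lemma ind_ninv s t : ind s t -> s <> inv t.
Proof. intros H E. apply (indep_ne1 gs s t H). subst. apply mulVg. Qed.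

Lemma ind_inv_r s t : ind s t -> ind s (inv t).
Proof. intro H. apply indep_sym, indep_inv, indep_sym, H. Qed.

Lemma ind_irr x : ~ ind x (inv x).
Proof. intro H. apply (ind_ninv _ _ H). rewrite inv_inv; reflexivity. Qed.

Inductive S : list G -> list G -> Prop :=
| S_here a b r : ind a b -> a <> b -> S (a::b::r) (b::a::r)
| S_cons c u v : S u v -> S (c::u) (c::v).

Inductive Ra : list G -> list G -> Prop :=
| Ra_here x r : Ra (x :: inv x :: r) r
| Ra_cons c u v : Ra u v -> Ra (c::u) (c::v).

Definition step u v := S u v \/ Ra u v.
Definition reach := clos_refl_trans _ step.
Definition eqv := clos_refl_sym_trans _ S.
Definition ok x c := ind c x /\ c <> x.

Inductive DF (x : G) : list G -> list G -> Prop :=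
| DF_end n : DF x (inv x :: n) n
| DF_skip c u v : ok x c -> DF x u v -> DF x (c :: u) (c :: v).

Inductive Del : list G -> list G -> Prop :=
| Del_here x u v : DF x u v -> Del (x :: u) v
| Del_cons c u v : Del u v -> Del (c :: u) (c :: v).

Lemma S_sym u v : S u v -> S v u.
Proof. induction 1. constructor; auto. apply indep_sym; auto. constructor; auto. Qed.

Lemma S_len u v : S u v -> length u = length v.
Proof. induction 1; simpl; auto. Qed.

Lemma eqv_len u v : eqv u v -> length u = length v.
Proof. induction 1; auto. apply S_len; auto. congruence. Qed.

Lemma reach_refl u : reach u u.
Proof. apply rt_refl. Qed.
Lemma reach_trans u v w : reach u v -> reach v w -> reach u w.
Proof. apply rt_trans. Qed.
Lemma S_reach u v : S u v -> reach u v.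
Proof. intro; apply rt_step; left; auto. Qed.
Lemma Ra_reach u v : Ra u v -> reach u v.
Proof. intro; apply rt_step; right; auto. Qed.

Lemma reach_cons c u v : reach u v -> reach (c::u) (c::v).
Proof. induction 1. apply rt_step. destruct H; [left|right]; constructor; auto.
  apply rt_refl. eapply rt_trans; eauto. Qed.

Lemma eqv_reach u v : eqv u v -> reach u v.
Proof. induction 1. apply S_reach; auto. apply rt_refl.
  clear H. Abort.

Lemma eqv_1n u v : eqv u v -> clos_refl_trans_1n _ (fun a b => S a b) u v.
Proof. intro H. apply clos_rst_rst1n in H. induction H. constructor.
  destruct H as [H|H]; econstructor; eauto. apply S_sym; auto. Qed.

Lemma eqv_reach u v : eqv u v -> reach u v.
Proof. intro H. apply eqv_1n in H. induction H. apply rt_refl.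
  eapply rt_trans; eauto. apply S_reach; auto. Qed.

Lemma DF_reach x u v : DF x u v -> reach (x :: u) v.
Proof. induction 1. apply Ra_reach; constructor.
  destruct H as [H1 H2]. eapply reach_trans. apply S_reach. constructor.
  apply indep_sym; eauto. auto. apply reach_cons; auto. Qed.

Lemma DF_move x u v : DF x u v -> reach (inv x :: v) u.
Proof. induction 1. apply reach_refl.
  destruct H as [H1 H2]. eapply reach_trans. apply S_reach. constructor.
  apply indep_inv, indep_sym; eauto. intro E. apply (ind_ninv _ _ H1). auto.
  apply reach_cons; auto. Qed.

Lemma Del_reach u v : Del u v -> reach u v.
Proof. induction 1. apply DF_reach; auto. apply reach_cons; auto. Qed.

Lemma Ra_Del u v : Ra u v -> Del u v.
Proof. induction 1. constructor; constructor. apply Del_cons; auto. Qed.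

Lemma DF_len x u v : DF x u v -> length u = Datatypes.S (length v).
Proof. induction 1; simpl; auto. Qed.
Lemma Del_len u v : Del u v -> length u = Datatypes.S (Datatypes.S (length v)).
Proof. induction 1; simpl; auto. rewrite (DF_len _ _ _ H). auto. Qed.
Lemma Ra_len u v : Ra u v -> length u = Datatypes.S (Datatypes.S (length v)).
Proof. intro; apply Del_len, Ra_Del; auto. Qed.

Definition join u v := exists z, reach u z /\ reach v z.

Lemma peakDF x w d d2 : DF x w d -> Ra w d2 -> join d (x :: d2).
Proof.
  intro H; revert d2; induction H; intros d2 HR.
  - inversion HR; subst.
    + rewrite inv_inv in *. eexists. split; apply reach_refl.
    + exists v. split. apply Ra_reach; auto. apply Ra_reach. constructor.
  - inversion HR; subst.
    + inversion H0; subst.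
      * destruct H as [_ H]. exfalso. apply H. rewrite <- (inv_inv c), <- H2, inv_inv. auto.
      * exists v0. split.
        -- apply Ra_reach. constructor.
        -- apply DF_reach; auto.
    + destruct (IHDF _ H4) as [z [Z1 Z2]]. exists (c :: z). split.
      * apply reach_cons; auto.
      * eapply reach_trans. apply S_reach. constructor.
        destruct H; apply indep_sym; auto. destruct H; auto.
        apply reach_cons; auto.
Qed.

Lemma peak w d1 d2 : Del w d1 -> Ra w d2 -> join d1 d2.
Proof.
  intro H; revert d2; induction H; intros d2 HR.
  - inversion HR; subst.
    + inversion H; subst.
      * eexists; split; apply reach_refl.
      * exfalso. destruct H2 as [H2 _]. exact (ind_irr x (indep_sym gs _ _ H2)).
    + apply (peakDF _ _ _ _ H H3).
  - inversion HR; subst.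
    + inversion H; subst.
      * exists d2. split. 2: apply reach_refl.
        pose proof (DF_move _ _ _ H3) as M. rewrite inv_inv in M. exact M.
      * exists v0. split. eapply reach_trans. apply Ra_reach. constructor. apply reach_refl.
        apply Del_reach; auto.
    + destruct (IHDel _ H3) as [z [Z1 Z2]]. exists (c :: z); split; apply reach_cons; auto.
Qed.

Lemma T_DF c w w' d : S w w' -> DF c w d -> exists d', DF c w' d' /\ reach d d'.
Proof.
  intro H; revert d; induction H; intros d HD.
  - inversion HD; subst.
    + exists (b :: r). split. 2: apply reach_refl. constructor. split.
      * apply indep_sym. pose proof (indep_inv gs _ _ H) as H'. rewrite inv_inv in H'. auto.
      * intro E. rewrite E in H. exact (ind_irr c (indep_sym gs _ _ H)).
      * constructor.
    + inversion H5; subst.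
      * exists (a :: v). split. constructor. apply reach_refl.
      * exists (b :: a :: v0). split. constructor; auto. constructor; auto.
        apply S_reach. constructor; auto.
  - inversion HD; subst.
    + exists v. split. constructor. apply S_reach; auto.
    + destruct (IHS _ H4) as [d' [D1 D2]]. exists (c0 :: d'). split. constructor; auto.
      apply reach_cons; auto.
Qed.

Lemma T w w' d : S w w' -> Del w d -> exists d', Del w' d' /\ reach d d'.
Proof.
  intro H; revert d; induction H; intros d HD.
  - inversion HD as [? ? ? HH|? ? ? HH]; subst.
    + inversion HH as [? | ? ? ? Hok HH2]; subst.
      * exfalso. apply (ind_irr a); auto.
      * eexists. split. apply Del_cons. constructor; eauto. apply reach_refl.
    + inversion HH as [? ? ? HH2|? ? ? HH2]; subst.
      * eexists. split. constructor. constructor; eauto. split; auto.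
        apply reach_refl.
      * eexists. split. apply Del_cons, Del_cons. eauto.
        apply S_reach; constructor; auto.
  - inversion HD as [? ? ? HH|? ? ? HH]; subst.
    + destruct (T_DF _ _ _ _ H HH) as [d' [D1 D2]]. exists d'. split; auto. constructor; auto.
    + destruct (IHS _ HH) as [d' [D1 D2]]. exists (c :: d'). split. apply Del_cons; auto.
      apply reach_cons; auto.
Qed.

Lemma T_eqv w w' d : eqv w w' -> Del w d -> exists d', Del w' d' /\ reach d d'.
Proof.
  intro H. apply eqv_1n in H. revert d. induction H; intros d HD.
  - exists d; split; auto. apply reach_refl.
  - destruct (T _ _ _ H HD) as [d1 [D1 D2]]. destruct (IHclos_refl_trans_1n _ D1) as [d2 [E1 E2]].
    exists d2; split; auto. eapply reach_trans; eauto.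
Qed.

Lemma reach_dec u n : reach u n -> eqv u n \/ exists u1 a, eqv u u1 /\ Ra u1 a /\ reach a n.
Proof.
  intro H. apply clos_rt_rt1n in H. induction H.
  - left. apply rst_refl.
  - destruct H as [H|H].
    + destruct IHclos_refl_trans_1n as [E|[u1 [a [E1 [E2 E3]]]]].
      * left. eapply rst_trans. apply rst_step; eauto. auto.
      * right. exists u1, a. split; auto. eapply rst_trans. apply rst_step; eauto. auto.
    + right. exists x, y. split. apply rst_refl. split; auto. apply clos_rt1n_rt; auto.
Qed.

Definition irred w := ~ exists d, Del w d.
Definition nf u n := reach u n /\ irred n.

Lemma nf_exists_k k : forall u, length u <= k -> exists n, nf u n.
Proof.
  induction k; intros u Hu.
  - destruct u; simpl in Hu; [|lia]. exists []. split. apply reach_refl.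
    intros [d Hd]. inversion Hd.
  - destruct (classic (exists d, Del u d)) as [[d Hd]|Hn].
    + pose proof (Del_len _ _ Hd). destruct (IHk d ltac:(lia)) as [n [N1 N2]].
      exists n. split; auto. eapply reach_trans. apply Del_reach; eauto. auto.
    + exists u. split; auto. apply reach_refl.
Qed.

Lemma nf_exists u : exists n, nf u n.
Proof. apply (nf_exists_k (length u)); auto. Qed.

Lemma eqv_sym u v : eqv u v -> eqv v u.
Proof. apply rst_sym. Qed.
Lemma eqv_trans u v w : eqv u v -> eqv v w -> eqv u w.
Proof. apply rst_trans. Qed.

Lemma claimU_k k : forall u, length u <= k -> forall n1 n2, nf u n1 -> nf u n2 -> eqv n1 n2.
Proof.
  induction k as [k IH] using (well_founded_induction Wf_nat.lt_wf).
  intros u Hu n1 n2 [R1 I1] [R2 I2].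
  destruct (reach_dec _ _ R1) as [E1|[u1 [a1 [E1 [F1 G1]]]]];
  destruct (reach_dec _ _ R2) as [E2|[u2 [a2 [E2 [F2 G2]]]]].
  - eapply eqv_trans. apply eqv_sym; eauto. auto.
  - exfalso. apply I1. destruct (T_eqv u2 n1 a2) as [d [D _]].
    eapply eqv_trans. apply eqv_sym; eauto. auto. apply Ra_Del; auto. eauto.
  - exfalso. apply I2. destruct (T_eqv u1 n2 a1) as [d [D _]].
    eapply eqv_trans. apply eqv_sym; eauto. auto. apply Ra_Del; auto. eauto.
  - assert (E12 : eqv u1 u2) by (eapply eqv_trans; [apply eqv_sym; eauto| auto]).
    destruct (T_eqv _ _ _ E12 (Ra_Del _ _ F1)) as [d' [D1 D2]].
    destruct (peak _ _ _ D1 F2) as [z [Z1 Z2]].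
    destruct (nf_exists z) as [m [M1 M2]].
    pose proof (eqv_len _ _ E1). pose proof (eqv_len _ _ E2).
    pose proof (Ra_len _ _ F1). pose proof (Ra_len _ _ F2).
    assert (A1 : eqv n1 m).
    { apply (IH (length a1) ltac:(lia) a1 (le_n _)). split; auto.
      split; auto. eapply reach_trans; eauto. eapply reach_trans; eauto. }
    assert (A2 : eqv n2 m).
    { apply (IH (length a2) ltac:(lia) a2 (le_n _)). split; auto.
      split; auto. eapply reach_trans; eauto. }
    eapply eqv_trans; eauto. apply eqv_sym; auto.
Qed.

Lemma claimU u n1 n2 : nf u n1 -> nf u n2 -> eqv n1 n2.
Proof. apply (claimU_k (length u)); auto. Qed.

Definition Wq := clos_refl_sym_trans _ step.

Lemma W_nf u v : Wq u v -> forall n1 n2, nf u n1 -> nf v n2 -> eqv n1 n2.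
Proof.
  induction 1; intros n1 n2 N1 N2.
  - apply (claimU x). auto. destruct N2; split; auto. eapply reach_trans; eauto.
    apply rt_step; auto.
  - eapply claimU; eauto.
  - apply eqv_sym; auto.
  - destruct (nf_exists y) as [m M]. eapply eqv_trans; eauto.
Qed.


Fixpoint vp (A : G) (w : list G) : list G :=
  A :: match w with [] => [] | s :: w' => vp (mul s A) w' end.

Fixpoint wd (l : list G) : list G :=
  match l with
  | x :: ((y :: _) as r) => mul y (inv x) :: wd r
  | _ => []
  end.

Lemma ratio (a X : G) : mul (mul a X) (inv X) = a.
Proof. rewrite <- mulA, mulgV, mulg1. reflexivity. Qed.

Lemma ratio2 (a b X : G) : mul (mul a X) (inv (mul b X)) = mul a (inv b).
Proof. rewrite inv_mul, mulA, <- (mulA a X), mulgV, mulg1. reflexivity. Qed.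

Lemma comm_r s t : ind s t -> mul (mul s t) (inv s) = t.
Proof. intro H. rewrite (indep_comm gs s t H), <- mulA, mulgV, mulg1. reflexivity. Qed.
Lemma comm_r2 (s t : G) : mul (mul s t) (inv t) = s.
Proof. rewrite <- mulA, mulgV, mulg1. reflexivity. Qed.

Lemma wd_app (l1 : list G) x r : wd (l1 ++ x :: r) = wd (l1 ++ [x]) ++ wd (x :: r).
Proof.
  induction l1 as [|a l1 IH]. reflexivity.
  destruct l1 as [|b l1]. reflexivity.
  change (mul b (inv a) :: wd ((b :: l1) ++ x :: r) = mul b (inv a) :: wd ((b :: l1) ++ [x]) ++ wd (x :: r)).
  rewrite IH. reflexivity.
Qed.

Lemma step_app c u v : step u v -> step (c ++ u) (c ++ v).
Proof. intro H; induction c; simpl; auto. destruct IHc; [left|right]; constructor; auto. Qed.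

Lemma cubic2_inv s t : cubic gs [s; t] -> ind s t /\ s <> t.
Proof.
  intros [[N [_ I]] _]. split.
  - apply I; simpl; auto. intro E; subst. inversion N; subst. apply H1; simpl; auto.
  - intro E; subst. inversion N; subst. apply H1; simpl; auto.
Qed.

Lemma hstep_word P l l' : hstep gs P l l' -> step (wd l) (wd l').
Proof.
  intro H. destruct H.
  - rewrite (wd_app l1 x (y :: x :: l2)), (wd_app l1 x l2). apply step_app. simpl. right.
    replace (mul x (inv y)) with (inv (mul y (inv x))). constructor.
    rewrite inv_mul, inv_inv. reflexivity.
  - rewrite (wd_app l1 A), (wd_app l1 A (mul t A :: _)). apply step_app. simpl.
    apply cubic2_inv in H. destruct H as [K1 K2].
    rewrite ratio, ratio, !ratio2, comm_r, comm_r2 by auto.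
    left. constructor; auto.
Qed.

Lemma htpy_W l l' : htpy gs (fun _ => True) l l' -> Wq (wd l) (wd l').
Proof.
  induction 1. apply rst_step. eapply hstep_word; eauto. apply rst_refl.
  apply rst_sym; auto. eapply rst_trans; eauto.
Qed.

Lemma cubic1_glide s : cubic gs [s] -> glide gs s.
Proof. intros [[_ [H _]] _]. apply H; simpl; auto. Qed.

Lemma epath P l A : edge_path gs P l -> hd_error l = Some A ->
  l = vp A (wd l) /\ Forall P l /\ Forall (glide gs) (wd l).
Proof.
  revert A. induction l as [|x l IH]; intros A H1 H2. destruct H1.
  simpl in H2. inversion H2; subst. destruct l as [|y l].
  - simpl. split; auto.
  - destruct H1 as [[Px [Py [s [Cs E]]]] H1]. subst y.
    destruct (IH (mul s A) H1 eq_refl) as [E1 [F1 F2]].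
    simpl wd. rewrite ratio. split; [|split].
    + simpl. f_equal. exact E1.
    + constructor; auto.
    + constructor; auto. apply cubic1_glide; auto.
Qed.


Definition vtail (X : G) (r : list G) : list G :=
  match r with [] => [] | s :: r' => vp (mul s X) r' end.
Lemma vp_eq X r : vp X r = X :: vtail X r.
Proof. destruct r; reflexivity. Qed.

Lemma cubic1 : regular gs -> forall s, glide gs s -> cubic gs [s].
Proof.
  intros R s H. apply R. split; [|split].
  - constructor. simpl; auto. constructor.
  - intros s0 [E|[]]; subst; auto.
  - intros s0 t0 [E|[]] [E'|[]] N; subst; congruence.
Qed.

Lemma cubic2 : regular gs -> forall s t, ind s t -> s <> t -> cubic gs [s; t].
Proof.
  intros R s t H N. destruct (indep_glide gs _ _ H) as [Gs Gt]. apply R. split; [|split].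
  - constructor. simpl. intros [E|[]]; auto. constructor. simpl; auto. constructor.
  - intros s0 [E|[E|[]]]; subst; auto.
  - intros s0 t0 [E|[E|[]]] [E'|[E'|[]]] N'; subst; try congruence; auto.
    apply indep_sym; auto.
Qed.

Lemma hstep_cons P X l l' : hstep gs P l l' -> hstep gs P (X :: l) (X :: l').
Proof.
  intro H. destruct H.
  - apply (@hs_back G gs P (X :: l1)); auto.
  - apply (@hs_square G gs P (X :: l1)); auto.
Qed.

Definition Dw (D : G -> Prop) A w := Forall D (vp A w) /\ Forall (glide gs) w.

Lemma S_D (R : regular gs) D (Hsq : square_condition gs D) w w' :
  S w w' -> forall A, Dw D A w -> Dw D A w' /\ hstep gs D (vp A w) (vp A w').
Proof.
  induction 1; intros A [F1 F2].
  - destruct (indep_glide gs _ _ H) as [Ga Gb].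
    assert (Eab : mul b (mul a A) = mul (mul a b) A).
    { rewrite mulA, (indep_comm gs a b H). reflexivity. }
    assert (Eba : mul a (mul b A) = mul (mul a b) A) by (rewrite mulA; reflexivity).
    change (vp A (a :: b :: r)) with (A :: mul a A :: vp (mul b (mul a A)) r) in *.
    change (vp A (b :: a :: r)) with (A :: mul b A :: vp (mul a (mul b A)) r).
    rewrite Eab in *. rewrite Eba. rewrite vp_eq in *.
    inversion F1 as [|? ? DA F1']; subst. inversion F1' as [|? ? DaA F1'']; subst.
    inversion F1'' as [|? ? DabA F3]; subst.
    assert (DbA : D (mul b A)).
    { assert (Hi : ind (inv a) b) by (apply indep_inv; auto).
      pose proof (Hsq (mul a A) (inv a) b DaA Hi) as K.
      rewrite mulA, mulVg, mul1g in K. rewrite Eab in K.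
      assert (E3 : mul (mul (inv a) b) (mul a A) = mul b A).
      { rewrite mulA, <- (mulA (inv a) b a), <- (indep_comm gs a b H), mulA, mulVg, mul1g. reflexivity. }
      rewrite <- E3. apply K; auto. }
    inversion F2 as [|? ? _ F2']; subst. inversion F2' as [|? ? _ F2'']; subst.
    split.
    + split. change (vp A (b :: a :: r)) with (A :: mul b A :: vp (mul a (mul b A)) r). rewrite Eba, vp_eq. repeat constructor; auto. repeat constructor; auto.
    + apply (@hs_square G gs D [] (vtail (mul (mul a b) A) r) A a b); auto.
      apply cubic2; auto.
  - inversion F2; subst. change (vp A (c :: u)) with (A :: vp (mul c A) u) in *.
    change (vp A (c :: v)) with (A :: vp (mul c A) v).
    inversion F1; subst.
    destruct (IHS (mul c A)) as [[E1 E2] E3]. split; auto.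
    split. split. constructor; auto. constructor; auto. apply hstep_cons; auto.
Qed.

Lemma Ra_D (R : regular gs) D w w' :
  Ra w w' -> forall A, Dw D A w -> Dw D A w' /\ hstep gs D (vp A w) (vp A w').
Proof.
  induction 1; intros A [F1 F2].
  - change (vp A (x :: inv x :: r)) with (A :: mul x A :: vp (mul (inv x) (mul x A)) r) in *.
    rewrite mulA, mulVg, mul1g in *. rewrite vp_eq in *.
    inversion F1 as [|? ? DA F1']; subst. inversion F1' as [|? ? DxA F1'']; subst.
    inversion F2 as [|? ? Gx F2']; subst. inversion F2' as [|? ? _ F2'']; subst.
    split. split; [rewrite vp_eq; auto | auto].
    apply (@hs_back G gs D [] (vtail A r) A (mul x A)).
    split; auto. split; auto. exists x. split; auto. apply cubic1; auto.
  - inversion F2; subst. change (vp A (c :: u)) with (A :: vp (mul c A) u) in *.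
    change (vp A (c :: v)) with (A :: vp (mul c A) v).
    inversion F1; subst.
    destruct (IHRa (mul c A)) as [[E1 E2] E3]. split; auto.
    split. split. constructor; auto. constructor; auto. apply hstep_cons; auto.
Qed.

Lemma reach_D (R : regular gs) D (Hsq : square_condition gs D) w w' :
  reach w w' -> forall A, Dw D A w -> Dw D A w' /\ htpy gs D (vp A w) (vp A w').
Proof.
  induction 1; intros A HD0.
  - destruct H as [H|H].
    + destruct (S_D R D Hsq _ _ H A HD0). split; auto. apply rst_step; auto.
    + destruct (Ra_D R D _ _ H A HD0). split; auto. apply rst_step; auto.
  - split; auto. apply rst_refl.
  - destruct (IHclos_refl_trans1 A HD0) as [K1 K2]. destruct (IHclos_refl_trans2 A K1) as [K3 K4].
    split; auto. eapply rst_trans; eauto.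
Qed.

End W.

Theorem corollary5p2 (G : group) (gs : gliding_system G) :
  regular gs -> finite_dim gs ->
  forall (D : G -> Prop), square_condition gs D ->
  forall A : G, D A ->
  forall p q : list G, eloop gs D A p -> eloop gs D A q ->
    htpy gs (fun _ => True) p q -> htpy gs D p q.
Proof.
  intros R _ D Hsq A HA p q [Pp [Hp _]] [Pq [Hq _]] H.
  destruct (epath G gs D p A Pp Hp) as [Ep [Fp Gp]].
  destruct (epath G gs D q A Pq Hq) as [Eq [Fq Gq]].
  pose proof (htpy_W G gs _ _ H) as W.
  destruct (nf_exists G gs (wd G p)) as [n1 N1].
  destruct (nf_exists G gs (wd G q)) as [n2 N2].
  pose proof (W_nf G gs _ _ W _ _ N1 N2) as E12.
  assert (Dp : Dw G gs D A (wd G p)) by (split; [rewrite <- Ep|]; auto).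
  assert (Dq : Dw G gs D A (wd G q)) by (split; [rewrite <- Eq|]; auto).
  destruct (reach_D G gs R D Hsq _ _ (proj1 N1) A Dp) as [D1 H1].
  destruct (reach_D G gs R D Hsq _ _ (proj1 N2) A Dq) as [D2 H2].
  destruct (reach_D G gs R D Hsq _ _ (eqv_reach G gs _ _ E12) A D1) as [_ H3].
  rewrite Ep, Eq. eapply rst_trans. exact H1. eapply rst_trans. exact H3. apply rst_sym. exact H2.
Qed.
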